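(* For all $0\le t<1$, $$\lim_{x\downarrow C^*\sqrt{1-t}}\frac{\partial}{\partial x}V^*(t,x)=\lim_{x\uparrow C^*\sqrt{1-t}}\frac{\partial}{\partial x}f(t,x),$$ where $$V^*(t,x)=\begin{cases}\sqrt{1-t}\,\sqrt{2\pi}\,\Phi(-x/\sqrt{1-t})e^{x^2/(2(1-t))}v(C^* ), & x>C^*\sqrt{1-t},\\ f(t,x), & x\le C^*\sqrt{1-t}.\end{cases}$$
   Context: $\Phi$ is the standard normal distribution function. $B^*\approx0.84$ is the unique positive solution of $\sqrt{2\pi}(1-B^2)e^{B^2/2}\Phi(B)=B$. Define $U(t,x)=\sqrt{2\pi(1-t)}(1-(B^* )^2)e^{x^2/(2(1-t))}\Phi(x/\sqrt{1-t})$ for $x<B^*\sqrt{1-t}$, and $U(t,x)=x$ otherwise. Set $f(t,x)=U(t,x)-x$. For $C\le B^*$ let $v(C)=\frac{1}{\Phi(-C)}[(1-(B^* )^2)\Phi(C)-Ce^{-C^2/2}/\sqrt{2\pi}]$ and $u(C)=1-(B^* )^2-(1-C^2)\Phi(-C)-\frac{C}{\sqrt{2\pi}}e^{-C^2/2}$. $C^*$ is the unique negative zero of $u$. *)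

(* Defs.v *)
From HB Require Import structures.
From mathcomp Require Import all_boot all_order all_algebra.
From mathcomp Require Import all_classical all_reals all_analysis.
Set Implicit Arguments. Unset Strict Implicit. Unset Printing Implicit Defensive.
Import Order.TTheory GRing.Theory Num.Theory.
Import numFieldNormedType.Exports.
Local Open Scope classical_set_scope.
Local Open Scope ring_scope.

Section defs.
Variable R : realType.

Definition phi (x : R) : R := expR (- (x ^+ 2) / 2) / Num.sqrt (2 * pi).

Definition Phi (x : R) : R :=
  \int[@lebesgue_measure R]_(s in `]-oo, x]) phi s.

Definition Bstar_eq (B : R) : Prop :=
  Num.sqrt (2 * pi) * (1 - B ^+ 2) * expR (B ^+ 2 / 2) * Phi B = B.

Definition U (B t x : R) : R :=
  if x < B * Num.sqrt (1 - t) then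
    Num.sqrt (2 * pi * (1 - t)) * (1 - B ^+ 2)
      * expR (x ^+ 2 / (2 * (1 - t))) * Phi (x / Num.sqrt (1 - t))
  else x.

Definition f (B t x : R) : R := U B t x - x.

Definition v (B C : R) : R :=
  ((1 - B ^+ 2) * Phi C - C * expR (- (C ^+ 2) / 2) / Num.sqrt (2 * pi))
    / Phi (- C).

Definition u (B C : R) : R :=
  1 - B ^+ 2 - (1 - C ^+ 2) * Phi (- C)
    - C / Num.sqrt (2 * pi) * expR (- (C ^+ 2) / 2).

(* V^*(t,x), with B^* and C^* as parameters B and C *)
Definition Vstar (B C t x : R) : R :=
  if C * Num.sqrt (1 - t) < x then
    Num.sqrt (1 - t) * Num.sqrt (2 * pi) * Phi (- x / Num.sqrt (1 - t))
      * expR (x ^+ 2 / (2 * (1 - t))) * v B C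
  else f B t x.

End defs.

(* Main.v *)
Require Import Defs.
From HB Require Import structures.
From mathcomp Require Import all_boot all_order all_algebra.
From mathcomp Require Import all_classical all_reals all_analysis.
From mathcomp Require Import ring lra.
Import Order.TTheory GRing.Theory Num.Theory.
Import numFieldNormedType.Exports.
Set Implicit Arguments. Unset Strict Implicit.
Local Open Scope classical_set_scope.
Local Open Scope ring_scope.


Section S.
Variable R : realType.
Notation mu := (@lebesgue_measure R).

Lemma phiE : @phi R = normal_pdf 0 1.
Proof.
apply/funext => x; rewrite /phi /normal_pdf oner_eq0 /normal_peak /normal_fun.
by rewrite expr1n mul1r subr0 mulrC mulr_natl.
Qed.

Lemma phi_ge0 x : 0 <= @phi R x.
Proof. by rewrite phiE normal_pdf_ge0. Qed.

Lemma phi_cont : continuous (@phi R).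
Proof. by rewrite phiE; apply: continuous_normal_pdf; rewrite oner_eq0. Qed.

Lemma phi_int : mu.-integrable [set: R] (EFin \o @phi R).
Proof. by rewrite phiE; exact: integrable_normal_pdf. Qed.

Lemma phi_tot : \int[mu]_x (@phi R x) = 1.
Proof. by rewrite /Rintegral phiE integral_normal_pdf. Qed.

Lemma phi_even x : @phi R (- x) = phi x.
Proof. by rewrite /phi sqrrN. Qed.

Lemma Phi_derive (x : R) : is_derive x 1 (@Phi R) (phi x).
Proof.
have hi : mu.-integrable [set` Interval -oo%O (BRight (x + 1))] (EFin \o @phi R).
  by apply: integrableS phi_int.
have [d e] := @continuous_FTC1 R (@phi R) -oo%O x (x + 1) (ltr_pwDr ltr01 (lexx x))
  hi (ltNyr _) (@phi_cont x).
by apply: DeriveDef; [exact: d| rewrite -derive1E; exact: e].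
Qed.
End S.
Section S2.
Variable R : realType.
Notation mu := (@lebesgue_measure R).

Lemma Phi_sym (x : R) : Phi x + Phi (- x) = 1.
Proof.
have hi : mu.-integrable [set` Interval -oo%O +oo%O] (EFin \o @phi R).
  by rewrite set_itvNyy; exact: (@phi_int R).
have := @Rintegral_itvB R (@phi R) -oo%O +oo%O x hi.
move=> /(_ isT isT).
rewrite set_itvNyy phi_tot Rintegral_itv_obnd_cbnd; last first.
  by apply: integrableS (@phi_int R).
move=> h.
suff -> : Phi (- x) = \int[mu]_(t in [set` Interval (BLeft x) +oo%O]) (@phi R t).
  by rewrite -h /Phi addrC subrK.
rewrite /Phi /Rintegral ge0_integration_by_substitutionNy //.
- by congr fine; apply: eq_integral => y _; rewrite /= phi_even.
- by apply: continuous_subspaceT; exact: (@phi_cont R).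
- by move=> y _; exact: (@phi_ge0 R).
Qed.
End S2.
Section H.
Variable R : realType.
Implicit Types (f g : R -> R) (x k df dg : R).

Lemma isd_ext f g x df : (forall y, f y = g y) -> is_derive x 1 f df -> is_derive x 1 g df.
Proof. by move=> /funext ->. Qed.

Lemma isd_mul f g x df dg : is_derive x 1 f df -> is_derive x 1 g dg ->
  is_derive x 1 (fun y => f y * g y) (f x * dg + g x * df).
Proof. by move=> hf hg; have := is_deriveM hf hg. Qed.

Lemma isd_cst k x : is_derive x 1 (fun _ : R => k) 0.
Proof. exact: is_derive_cst. Qed.

Lemma isd_id x : is_derive x 1 (fun y : R => y) 1.
Proof. exact: is_derive_id. Qed.

Lemma isd_add f g x df dg : is_derive x 1 f df -> is_derive x 1 g dg ->
  is_derive x 1 (fun y => f y + g y) (df + dg).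
Proof. by move=> hf hg; have := is_deriveD hf hg. Qed.

Lemma isd_opp f x df : is_derive x 1 f df ->
  is_derive x 1 (fun y => - f y) (- df).
Proof. by move=> hf; have := is_deriveN hf. Qed.

Lemma isd_comp f g x df dg : is_derive (g x) 1 f df -> is_derive x 1 g dg ->
  is_derive x 1 (fun y => f (g y)) (df * dg).
Proof. by move=> hf hg; have := is_derive1_comp hf hg. Qed.

Lemma isd_cont f x df : is_derive x 1 f df -> {for x, continuous f}.
Proof.
move=> [d _]; exact/differentiable_continuous/derivable1_diffP.
Qed.

Lemma c_mul f g x : {for x, continuous f} -> {for x, continuous g} ->
  {for x, continuous (fun y => f y * g y)}.
Proof. exact: continuousM. Qed.

Lemma c_add f g x : {for x, continuous f} -> {for x, continuous g} ->
  {for x, continuous (fun y => f y + g y)}.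
Proof. exact: continuousD. Qed.

Lemma c_opp f x : {for x, continuous f} -> {for x, continuous (fun y => - f y)}.
Proof. exact: continuousN. Qed.

Lemma c_cst k x : {for x, continuous (fun _ : R => k)}.
Proof. exact: cvg_cst. Qed.

Lemma c_id x : {for x, continuous (fun y : R => y)}.
Proof. exact: cvg_id. Qed.

Lemma c_comp f g x : {for x, continuous g} -> {for (g x), continuous f} ->
  {for x, continuous (fun y => f (g y))}.
Proof. by move=> hg hf; exact: (continuous_comp hg hf). Qed.


Variables (B C t : R).
Hypotheses (ht0 : 0 <= t) (ht1 : t < 1).

Definition E (y : R) := expR (y ^+ 2 / (2 * (1 - t))).

Lemma E_der (y : R) : is_derive y 1 E (E y * (y / (1 - t))).
Proof.
have h := isd_comp (is_derive_expR _)
  (isd_mul (isd_mul (isd_id y) (isd_id y)) (isd_cst (2 * (1 - t))^-1 y)).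
apply: is_derive_eq.
have t1 : 1 - t != 0 by rewrite subr_eq0 gt_eqF.
rewrite /E expr2; field; rewrite t1 //.
Qed.

Notation s := (Num.sqrt (1 - t)).

Lemma s_gt0 : 0 < s.
Proof. by rewrite sqrtr_gt0 subr_gt0. Qed.

Lemma s2 : s ^+ 2 = 1 - t.
Proof. by rewrite sqr_sqrtr // subr_ge0 ltW. Qed.

Definition gL (y : R) := Num.sqrt (2 * pi * (1 - t)) * (1 - B ^+ 2) * E y * Phi (y / s) - y.
Definition DL (y : R) := Num.sqrt (2 * pi * (1 - t)) * (1 - B ^+ 2) *
  (E y * (y / (1 - t)) * Phi (y / s) + E y * (phi (y / s) / s)) - 1.

Lemma gL_der (y : R) : is_derive y 1 gL (DL y).
Proof.
have hP := isd_comp (g := fun z => z / s) (x := y) (Phi_derive (y / s)) (isd_mul (isd_id y) (isd_cst s^-1 y)).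
have h := isd_add (isd_mul (isd_mul (isd_cst (Num.sqrt (2 * pi * (1 - t)) * (1 - B ^+ 2)) y) (E_der y)) hP) (isd_opp (isd_id y)).
apply: is_derive_eq; rewrite /DL; ring.
Qed.

Definition gR (y : R) := s * Num.sqrt (2 * pi) * Phi (- y / s) * E y * v B C.
Definition DR (y : R) := s * Num.sqrt (2 * pi) * v B C *
  (Phi (- y / s) * (E y * (y / (1 - t))) - E y * (phi (- y / s) / s)).

Lemma gR_der (y : R) : is_derive y 1 gR (DR y).
Proof.
have hP := isd_comp (g := fun z => - z / s) (x := y) (Phi_derive (- y / s)) (isd_mul (isd_opp (isd_id y)) (isd_cst s^-1 y)).
have h := isd_mul (isd_mul (isd_mul (isd_cst (s * Num.sqrt (2 * pi)) y) hP) (E_der y)) (isd_cst (v B C) y).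
apply: is_derive_eq; rewrite /DR; ring.
Qed.

Lemma cE (y : R) : {for y, continuous E}.
Proof. exact: isd_cont (E_der y). Qed.

Lemma cPs (y a : R) : {for y, continuous (fun z => Phi (a * z / s))}.
Proof.
apply: (c_comp (g := fun z => a * z / s)).
  by apply: c_mul; [apply: c_mul; [exact: c_cst|exact: c_id]|exact: c_cst].
exact: isd_cont (Phi_derive _).
Qed.

Lemma cphis (y a : R) : {for y, continuous (fun z => phi (a * z / s))}.
Proof.
apply: (c_comp (g := fun z => a * z / s)).
  by apply: c_mul; [apply: c_mul; [exact: c_cst|exact: c_id]|exact: c_cst].
exact: phi_cont.
Qed.

Lemma DL_cont (y : R) : {for y, continuous DL}.
Proof.
have e : DL = fun z => Num.sqrt (2 * pi * (1 - t)) * (1 - B ^+ 2) *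
  (E z * (z / (1 - t)) * Phi (1 * z / s) + E z * (phi (1 * z / s) / s)) - 1.
  by apply/funext => z; rewrite /DL mul1r.
rewrite e.
apply: c_add; last exact: c_cst.
apply: c_mul; first exact: c_cst.
apply: c_add; apply: c_mul.
- apply: c_mul; first exact: cE.
  by apply: c_mul; [exact: c_id|exact: c_cst].
- exact: cPs.
- exact: cE.
- apply: c_mul; last exact: c_cst.
  exact: cphis.
Qed.

Lemma DR_cont (y : R) : {for y, continuous DR}.
Proof.
have e : DR = fun z => s * Num.sqrt (2 * pi) * v B C *
  (Phi ((-1) * z / s) * (E z * (z / (1 - t))) + - (E z * (phi ((-1) * z / s) / s))).
  by apply/funext => z; rewrite /DR mulN1r.
rewrite e.
apply: c_mul; first exact: c_cst.
apply: c_add; last apply: c_opp; apply: c_mul.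
- exact: cPs.
- apply: c_mul; first exact: cE.
  by apply: c_mul; [exact: c_id|exact: c_cst].
- exact: cE.
- apply: c_mul; last exact: c_cst.
  exact: cphis.
Qed.
End H.
Lemma alg (R : realType) (a P Q C e e' r s : R) : Q != 0 -> r != 0 -> s != 0 -> e * e' = 1 -> P + Q = 1 ->
  a - (1 - C ^+ 2) * Q - C / r * e' = 0 ->
  s * r * ((a * P - C * e' / r) / Q) * (Q * (e * (C * s / s ^+ 2)) - e * (e' / r / s)) =
  r * s * a * (e * (C * s / s ^+ 2) * P + e * (e' / r / s)) - 1.
Proof.
move=> Q0 r0 s0 ee PQ hu.
have e0 : e != 0 by apply/eqP => e0; move: ee; rewrite e0 mul0r => /eqP; rewrite eq_sym oner_eq0.
have -> : a = (1 - C ^+ 2) * Q + C / r * e'.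
  by rewrite -[LHS]subr0 -hu; ring.
have -> : e' = e^-1 by apply: (mulfI e0); rewrite ee divff.
have -> : P = 1 - Q by rewrite -PQ addrK.
field.
by rewrite Q0 r0 s0 e0.
Qed.

Lemma Phi_pos (R : realType) (y : R) : 0 <= y -> 0 < Phi y.
Proof.
move=> y0.
have hi : (@lebesgue_measure R).-integrable [set` Interval -oo%O (BRight y)] (EFin \o @phi R).
  by apply: integrableS (@phi_int R).
have := @Rintegral_itvB R (@phi R) -oo%O (BRight y) 0 hi isT.
rewrite bnd_simp => /(_ y0) h.
have h0 : Phi (0 : R) = 2^-1.
  have := Phi_sym (0 : R); rewrite oppr0 => h2.
  lra.
have : 0 <= \int[@lebesgue_measure R]_(x in [set` Interval (BRight 0) (BRight y)]) (@phi R x).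
  by apply: Rintegral_ge0 => z _; exact: phi_ge0.
rewrite -h /Phi => h1.
have : Phi (0:R) <= Phi y by rewrite -subr_ge0.
by rewrite h0; apply: lt_le_trans; rewrite invr_gt0.
Qed.

Unset Implicit Arguments.
Theorem lemma3p3 (R : realType) (B C : R)
  (hB : 0 < B) (hBeq : Bstar_eq B)
  (hBuniq : forall B' : R, 0 < B' -> Bstar_eq B' -> B' = B)
  (hC : C < 0) (hCeq : u B C = 0)
  (hCuniq : forall C' : R, C' < 0 -> u B C' = 0 -> C' = C)
  (t : R) (ht0 : 0 <= t) (ht1 : t < 1) :
  exists L : R,
    (\forall x \near (C * Num.sqrt (1 - t))^'+, derivable (Vstar B C t) x 1) /\
    (\forall x \near (C * Num.sqrt (1 - t))^'-, derivable (f B t) x 1) /\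
    (derive1 (Vstar B C t) x @[x --> (C * Num.sqrt (1 - t))^'+] --> L) /\
    (derive1 (f B t) x @[x --> (C * Num.sqrt (1 - t))^'-] --> L).
Proof.
have sg : 0 < Num.sqrt (1 - t) by rewrite sqrtr_gt0 subr_gt0.
have c0 : C * Num.sqrt (1 - t) < 0 by rewrite pmulr_llt0.
have cB : C * Num.sqrt (1 - t) < B * Num.sqrt (1 - t).
  by rewrite (lt_trans c0) // mulr_gt0.
have isR : forall y, C * Num.sqrt (1 - t) < y -> is_derive y 1 (Vstar B C t) (DR B C t y).
  move=> y cy; apply: (near_eq_is_derive _ (gR_der B C ht1 y)).
  apply: filterS (lt_nbhsr cy) => z cz.
  by rewrite /Vstar cz.
have isL : forall y, y < C * Num.sqrt (1 - t) -> is_derive y 1 (f B t) (DL B t y).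
  move=> y yc; apply: (near_eq_is_derive _ (gL_der B ht1 y)).
  apply: filterS (lt_nbhsl (lt_trans yc cB)) => z zB.
  by rewrite /f /U zB.
exists (DR B C t (C * Num.sqrt (1 - t))).
split; [|split; [|split]].
- apply: filterS (nbhs_right_gt _) => y cy.
  by case: (isR y cy).
- apply: filterS (nbhs_left_lt _) => y yc.
  by case: (isL y yc).
- have hc := cvg_at_right_filter (@DR_cont _ B C t ht1 (C * Num.sqrt (1 - t))).
  apply: cvg_trans hc; apply: near_eq_cvg.
  apply: filterS (nbhs_right_gt _) => y cy.
  by case: (isR y cy) => _ h; rewrite derive1E h.
- suff -> : DR B C t (C * Num.sqrt (1 - t)) = DL B t (C * Num.sqrt (1 - t)).
    have hc := cvg_at_left_filter (@DL_cont _ B t ht1 (C * Num.sqrt (1 - t))).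
    apply: cvg_trans hc; apply: near_eq_cvg.
    apply: filterS (nbhs_left_lt _) => y yc.
    by case: (isL y yc) => _ h; rewrite derive1E h.
  rewrite /DR /DL.
  have hs := @s2 _ _ ht1.
  set s := Num.sqrt (1 - t) in sg hs *.
  have s0 : s != 0 by rewrite gt_eqF.
  have hc1 : C * s / s = C by rewrite mulfK.
  have hc2 : - (C * s) / s = - C by rewrite mulNr mulfK.
  rewrite hc1 hc2 phi_even.
  have -> : Num.sqrt (2 * pi * (1 - t)) = Num.sqrt (2 * pi) * s.
    by rewrite sqrtrM // mulr_ge0 // pi_ge0.
  have -> : E t (C * s) = expR (C ^+ 2 / 2).
    by rewrite /E -hs; congr expR; field.
  rewrite -hs /phi /v.
  have r0 : Num.sqrt (2 * pi) != 0 :> R by rewrite gt_eqF // sqrtr_gt0 mulr_gt0 // pi_gt0.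
  have hQ : Phi (- C) != 0 by rewrite gt_eqF // Phi_pos // oppr_ge0 ltW.
  have hee : expR (C ^+ 2 / 2) * expR (- C ^+ 2 / 2) = 1 :> R.
    by rewrite -expRD mulNr addrN expR0.
  apply: alg => //; exact: Phi_sym.
Qed.
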